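(* For all real numbers $a,b,c>0$, \[ \frac{(ab+ac+bc)^{2}}{\sqrt{a^{2}+b^{2}+c^{2}}\,\sqrt{a^{2}+b^{2}+c^{2}+3ab+3bc+3ca}} \leq \frac{a^{2}b}{\sqrt{b^{2}+3ac}} + \frac{b^{2}c}{\sqrt{c^{2}+3ab}} + \frac{c^{2}a}{\sqrt{a^{2}+3bc}}. \] *)

(* Defs.v *)
From Stdlib Require Export Reals.

(* Main.v *)
Require Import Defs.
From Stdlib Require Import Reals Lra Psatz.
Open Scope R_scope.

Lemma sq_le_aux (A B : R) : 0 < A -> B^2 <= A^2 -> B <= A.
Proof. intros HA H. nra. Qed.

Lemma pair_aux (X Y p q u v : R) : 0 < X -> 0 < Y -> 0 < p -> 0 < q ->
  X * p = u^2 -> Y * q = v^2 -> 2*(u*v) <= X*q + Y*p.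
Proof.
  intros hX hY hp hq e1 e2.
  assert (H : (X*q+Y*p)^2 - (2*(u*v))^2 = (X*q - Y*p)^2).
  { replace ((2*(u*v))^2) with (4*(u^2*v^2)) by ring. rewrite <- e1, <- e2. ring. }
  apply sq_le_aux.
  - apply Rplus_lt_0_compat; apply Rmult_lt_0_compat; assumption.
  - pose proof (pow2_ge_0 (X*q - Y*p)). lra.
Qed.

Theorem mainTheorem10 (a b c : R) (ha : 0 < a) (hb : 0 < b) (hc : 0 < c) :
  (a*b + a*c + b*c)^2
    / (sqrt (a^2 + b^2 + c^2) * sqrt (a^2 + b^2 + c^2 + 3*a*b + 3*b*c + 3*c*a))
  <= a^2*b / sqrt (b^2 + 3*a*c) + b^2*c / sqrt (c^2 + 3*a*b)
     + c^2*a / sqrt (a^2 + 3*b*c).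
Proof.
  assert (h1 : 0 < b^2 + 3*a*c) by nra.
  assert (h2 : 0 < c^2 + 3*a*b) by nra.
  assert (h3 : 0 < a^2 + 3*b*c) by nra.
  assert (h4 : 0 < a^2 + b^2 + c^2) by nra.
  assert (h5 : 0 < a^2 + b^2 + c^2 + 3*a*b + 3*b*c + 3*c*a) by nra.
  pose proof (sqrt_lt_R0 _ h1) as hx. pose proof (sqrt_sqrt _ (Rlt_le _ _ h1)) as ex.
  pose proof (sqrt_lt_R0 _ h2) as hy. pose proof (sqrt_sqrt _ (Rlt_le _ _ h2)) as ey.
  pose proof (sqrt_lt_R0 _ h3) as hz. pose proof (sqrt_sqrt _ (Rlt_le _ _ h3)) as ez.
  pose proof (sqrt_lt_R0 _ h4) as hs. pose proof (sqrt_sqrt _ (Rlt_le _ _ h4)) as es.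
  pose proof (sqrt_lt_R0 _ h5) as ht. pose proof (sqrt_sqrt _ (Rlt_le _ _ h5)) as et.
  set (x := sqrt (b^2 + 3*a*c)) in *.
  set (y := sqrt (c^2 + 3*a*b)) in *.
  set (z := sqrt (a^2 + 3*b*c)) in *.
  set (s := sqrt (a^2 + b^2 + c^2)) in *.
  set (t := sqrt (a^2 + b^2 + c^2 + 3*a*b + 3*b*c + 3*c*a)) in *.
  assert (hX : 0 < a^2*b/x) by (apply Rdiv_lt_0_compat; [apply Rmult_lt_0_compat; [apply pow_lt|]|]; lra).
  assert (hY : 0 < b^2*c/y) by (apply Rdiv_lt_0_compat; [apply Rmult_lt_0_compat; [apply pow_lt|]|]; lra).
  assert (hZ : 0 < c^2*a/z) by (apply Rdiv_lt_0_compat; [apply Rmult_lt_0_compat; [apply pow_lt|]|]; lra).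
  assert (eX : a^2*b/x * (b*x) = (a*b)^2) by (field; lra).
  assert (eY : b^2*c/y * (c*y) = (b*c)^2) by (field; lra).
  assert (eZ : c^2*a/z * (a*z) = (c*a)^2) by (field; lra).
  set (X := a^2*b/x) in *. set (Y := b^2*c/y) in *. set (Z := c^2*a/z) in *.
  assert (hp : 0 < b*x) by nra. assert (hq : 0 < c*y) by nra. assert (hr : 0 < a*z) by nra.
  pose proof (pair_aux _ _ _ _ _ _ hX hY hp hq eX eY) as P1.
  pose proof (pair_aux _ _ _ _ _ _ hY hZ hq hr eY eZ) as P2.
  pose proof (pair_aux _ _ _ _ _ _ hX hZ hp hr eX eZ) as P3.
  assert (T : (a*b+a*c+b*c)^2 <= (X+Y+Z)*(b*x+c*y+a*z)) by nra.
  assert (C : b*x+c*y+a*z <= s*t).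
  { apply sq_le_aux; [nra|].
    replace ((s*t)^2) with ((s*s)*(t*t)) by ring. rewrite es, et.
    assert (E : a^2 + b^2 + c^2 + 3*a*b + 3*b*c + 3*c*a = x*x+y*y+z*z) by (rewrite ex, ey, ez; ring).
    rewrite E.
    assert (L : (a^2+b^2+c^2)*(x*x+y*y+z*z) - (b*x+c*y+a*z)^2
               = (b*y-c*x)^2 + (c*z-a*y)^2 + (a*x-b*z)^2 + (b*z-a*x)^2*0 + (a*y-c*z)^2*0 + (c*x-b*y)^2*0 + ((b*z)^2+(a*x)^2 - 2*(b*z)*(a*x))*0) by ring.
    pose proof (pow2_ge_0 (b*y-c*x)). pose proof (pow2_ge_0 (c*z-a*y)). pose proof (pow2_ge_0 (a*x-b*z)).
    lra. }
  apply (Rle_trans _ ((a*b+a*c+b*c)^2 / (b*x+c*y+a*z))).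
  - apply Rmult_le_compat_l. apply pow2_ge_0.
    apply Rinv_le_contravar; lra.
  - apply (Rmult_le_reg_r (b*x+c*y+a*z)). lra.
    unfold Rdiv. rewrite Rmult_assoc, Rinv_l by lra. lra.
Qed.
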